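(* Let $[n]$ be a set of items, $\boldsymbol\theta=(\boldsymbol\theta_1,\dots,\boldsymbol\theta_n)$ a vector of independent non-negative real random variables, $f:\mathbb{R}^n_{\ge0}\to\mathbb{R}_{\ge0}$ a monotone submodular value function, and $k\in[n]$. Let $\pi$ be an optimal adaptive policy selecting $k$ items, and let $x_i$ be the probability that item $i$ is selected by $\pi$. Let $\hat{\boldsymbol\theta}$ be a random vector with the same distribution as $\boldsymbol\theta$ and independent of $\boldsymbol\theta$. Then for every $S\subseteq[n]$, $$\mathbb{E}_{\boldsymbol\theta,\hat{\boldsymbol\theta}}\big[f\big(\boldsymbol\theta(S)\vee\hat{\boldsymbol\theta}(U_{\hat{\boldsymbol\theta},k}(\pi)\cup S)\big)\big]\le \mathbb{E}_{\boldsymbol\theta,\hat{\boldsymbol\theta}}\big[f(\boldsymbol\theta(S)\vee\hat{\boldsymbol\theta}(S))\big]+\sum_{i\in[n]\setminus S}x_i\,\mathbb{E}_{\boldsymbol\theta}\big[\Delta(i\mid\boldsymbol\theta(S))\big].$$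
   Context: A monotone submodular value function $f$ is non-decreasing in each coordinate and satisfies $f(x\vee y)+f(x\wedge y)\le f(x)+f(y)$ for all $x,y\in\mathbb{R}^n_{\ge0}$ ($\vee,\wedge$ componentwise max/min). For $S\subseteq[n]$, $\boldsymbol\theta(S)$ is the random vector with $i$-th coordinate $\boldsymbol\theta_i$ if $i\in S$ and $0$ otherwise (observing it also reveals $S$); similarly for $\hat{\boldsymbol\theta}(S)$. An adaptive policy $\pi$ starts with $U=\emptyset$ and for $k$ steps observes the partial state $\xi=\boldsymbol\theta(U)$ and adds an item $\pi(\xi)\in[n]\setminus U$ to $U$; the final set is $U_{\boldsymbol\theta,k}(\pi)$, and $U_{\hat{\boldsymbol\theta},k}(\pi)$ is the set obtained when the policy observes partial states of $\hat{\boldsymbol\theta}$ instead. $\pi$ is optimal if it maximizes $\mathbb{E}[f(\boldsymbol\theta(U_{\boldsymbol\theta,k}(\pi)))]$. For $i\in[n]$, $\mathbf e^i$ is a random vector (independent of everything else) whose $i$-th coordinate has the distribution of $\boldsymbol\theta_i$ and whose other coordinates are $0$; for a partial state $\xi$, $\Delta(i\mid\xi):=\mathbb{E}_{\mathbf e^i}[f(\xi\vee\mathbf e^i)-f(\xi)]$. *)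

(* Defs.v *)
From HB Require Import structures.
From mathcomp Require Import all_boot all_order all_algebra.
From mathcomp Require Import all_classical all_reals all_analysis.
Set Implicit Arguments. Unset Strict Implicit. Unset Printing Implicit Defensive.
Import Order.TTheory GRing.Theory Num.Theory.
Local Open Scope ring_scope.
Local Open Scope classical_set_scope.

Section Defs.
Context {R : realType} {n : nat}.

Definition vjoin (x y : 'I_n -> R) : 'I_n -> R := fun i => Num.max (x i) (y i).
Definition vmeet (x y : 'I_n -> R) : 'I_n -> R := fun i => Num.min (x i) (y i).

Definition nonneg_vec (x : 'I_n -> R) := forall i, 0 <= x i.

Definition restr (S : {set 'I_n}) (x : 'I_n -> R) : 'I_n -> R :=
  fun i => if i \in S then x i else 0.

Definition unitv (i : 'I_n) (v : R) : 'I_n -> R :=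
  fun j => if j == i then v else 0.

Definition monotone_submodular (f : ('I_n -> R) -> R) :=
  [/\ forall x, nonneg_vec x -> 0 <= f x,
      forall x y, nonneg_vec x -> nonneg_vec y -> (forall i, x i <= y i) -> f x <= f y
    & forall x y, nonneg_vec x -> nonneg_vec y ->
        f (vjoin x y) + f (vmeet x y) <= f x + f y].

(* Borel measurability of a function on R^n, expressed through composition
   with measurable coordinate maps on an arbitrary measurable space. *)
Definition vec_measurable (F : ('I_n -> R) -> R) :=
  forall (d : measure_display) (T : measurableType d) (g : 'I_n -> T -> R),
    (forall i, measurable_fun setT (g i)) ->
    measurable_fun setT (fun t => F (fun i => g i t)).

(* An adaptive policy: given the observed set U and the partial state
   xi = x(U), it chooses the next item. *)
Definition policy := {set 'I_n} -> ('I_n -> R) -> 'I_n.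

Definition valid_policy (k : nat) (pi : policy) :=
  forall (U : {set 'I_n}) xi, (#|U| < k)%N -> pi U xi \notin U.

Definition policy_measurable (pi : policy) :=
  forall (U : {set 'I_n}) j, vec_measurable (fun xi => (pi U xi == j)%:R).

Fixpoint run (pi : policy) (x : 'I_n -> R) (k : nat) : {set 'I_n} :=
  match k with
  | 0 => finset.set0
  | k'.+1 => let U := run pi x k' in pi U (restr U x) |: U
  end.

End Defs.

Section Prob.
Context {R : realType} {d : measure_display} {T : measurableType d}.

Definition mutually_independent (P : probability T R) (I : finType)
    (X : I -> T -> R) :=
  forall B : I -> set R, (forall i, measurable (B i)) ->
    P [set t | forall i, B i (X i t)] =
    (\prod_(i : I) fine (P (X i @^-1` B i)))%:E.

Definition same_law (P : probability T R) (X Y : T -> R) :=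
  forall B : set R, measurable B -> P (X @^-1` B) = P (Y @^-1` B).

Definition vec_of {n} (X : 'I_n -> T -> R) (t : T) : 'I_n -> R := fun i => X i t.

(* Delta(i | xi) = E_{e^i}[f(xi \/ e^i) - f(xi)], where e^i has i-th coordinate
   distributed as theta_i; xi is a fixed (deterministic) partial state, so the
   expectation over e^i is the integral against the law of theta_i, written
   here as an integral over P of v = th i t. *)
Definition Delta {n} (P : probability T R) (th : 'I_n -> T -> R)
    (f : ('I_n -> R) -> R) (i : 'I_n) (xi : 'I_n -> R) : \bar R :=
  (\int[P]_t (f (vjoin xi (unitv i (th i t))) - f xi)%:E)%E.

End Prob.

(* Main.v *)
Require Import Defs.
From HB Require Import structures.
From mathcomp Require Import all_boot all_order all_algebra.
From mathcomp Require Import all_classical all_reals all_analysis.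
From mathcomp Require Import measurable_realfun.
Import Order.TTheory GRing.Theory Num.Theory.
Local Open Scope ring_scope.
Local Open Scope classical_set_scope.



Section Law.
Context {R : realType} (K : finType).
Definition VK := K -> R.
HB.instance Definition _ := Choice.on VK.
HB.instance Definition _ := isPointed.Build VK (fun _ => 0%R).
Definition cyl : set (set VK) :=
  [set C | exists B : K -> set R, (forall k, measurable (B k)) /\
     C = [set v | forall k, B k (v k)]].
Definition MV : measurableType cyl.-sigma := g_sigma_algebraType cyl.

Lemma cylT : cyl setT.
Proof.
exists (fun _ => setT); split => //.
by apply/seteqP; split => v.
Qed.

Lemma cylI : setI_closed cyl.
Proof.
move=> _ _ [B [mB ->]] [C [mC ->]].
exists (fun k => B k `&` C k); split; first by move=> k; exact: measurableI.
apply/seteqP; split => v /=.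
- by move=> [h1 h2] k; split.
- by move=> h; split => k; case: (h k).
Qed.

Lemma mcoord k : measurable_fun setT (fun v : MV => v k).
Proof.
move=> _ A mA; rewrite setTI; apply: sub_sigma_algebra.
exists (fun j => if j == k then A else setT); split.
  by move=> j; case: ifP.
apply/seteqP; split => v /=.
- by move=> h j; case: ifP => // /eqP ->.
- by move=> /(_ k); rewrite eqxx.
Qed.

Lemma mvec d' (T' : measurableType d') (Y : K -> T' -> R) :
  (forall k, measurable_fun setT (Y k)) ->
  measurable_fun setT ((fun t k => Y k t) : T' -> MV).
Proof.
move=> mY; apply: (@measurability _ _ T' MV setT _ cyl) => //.
move=> _ [_ [B [mB ->]] <-].
rewrite (_ : _ `&` _ = \bigcap_(k in setT) (setT `&` Y k @^-1` B k)).
  apply: fin_bigcap_measurable => //.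
  by move=> k _; exact: mY.
apply/seteqP; split => t /=.
- by move=> [_ h] k _; split.
- by move=> h; split => // k; case: (h k I).
Qed.

Lemma law d1 d2 (T1 : measurableType d1) (T2 : measurableType d2)
  (P1 : probability T1 R) (P2 : probability T2 R)
  (Y1 : K -> T1 -> R) (Y2 : K -> T2 -> R) :
  (forall k, measurable_fun setT (Y1 k)) ->
  (forall k, measurable_fun setT (Y2 k)) ->
  (forall B : K -> set R, (forall k, measurable (B k)) ->
     P1 [set t | forall k, B k (Y1 k t)] = P2 [set t | forall k, B k (Y2 k t)]) ->
  forall phi : MV -> R, measurable_fun setT phi -> (forall v, 0 <= phi v) ->
  (\int[P1]_t (phi (fun k => Y1 k t))%:E = \int[P2]_t (phi (fun k => Y2 k t))%:E)%E.
Proof.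
move=> mY1 mY2 hB phi mphi phi0.
have m1 := @mvec _ _ Y1 mY1; have m2 := @mvec _ _ Y2 mY2.
have mphi' : measurable_fun setT (EFin \o phi) by apply/measurable_EFinP.
pose X1 : {mfun T1 >-> MV} := HB.pack ((fun t k => Y1 k t) : T1 -> MV)
  (isMeasurableFun.Build _ _ T1 MV _ m1).
pose X2 : {mfun T2 >-> MV} := HB.pack ((fun t k => Y2 k t) : T2 -> MV)
  (isMeasurableFun.Build _ _ T2 MV _ m2).
transitivity (\int[distribution P1 X1]_v (phi v)%:E)%E.
  by rewrite ge0_integral_distribution// => v; rewrite lee_fin.
transitivity (\int[distribution P2 X2]_v (phi v)%:E)%E;
  last by rewrite ge0_integral_distribution// => v; rewrite lee_fin.
apply: eq_measure_integral => A mA _.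
apply: (@g_sigma_algebra_measure_unique _ R MV cyl _ (fun _ => setT) _ _ (distribution P1 X1) (distribution P2 X2)) => //.
- by move=> C hC; exact: sub_sigma_algebra.
- by move=> _; exact: cylT.
- by apply/seteqP; split => // v _; exists 0%N.
- exact: cylI.
- move=> _ [B [mB ->]].
  by rewrite -[LHS]/(P1 [set t | forall k, B k (Y1 k t)]) hB.
- by move=> _; rewrite -[X in (X < _)%E]/(P1 setT) probability_setT ltry.
Qed.
End Law.



Section Pointwise.
Context {R : realType} {n : nat}.
Implicit Types (x a : 'I_n -> R) (f : ('I_n -> R) -> R) (pi : @policy R n).

Definition Ev pi (i : 'I_n) (m : nat) x : bool :=
  (i \notin run pi x m) && (pi (run pi x m) (restr (run pi x m) x) == i).

Definition hh f (i : 'I_n) a (r : R) : R := f (vjoin a (unitv i r)) - f a.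

Lemma hh_ge0 f i a r : monotone_submodular f -> nonneg_vec a -> 0 <= r ->
  0 <= hh f i a r.
Proof.
move=> [_ mono _] a0 r0; rewrite /hh subr_ge0; apply: mono => //.
- move=> j; rewrite /vjoin le_max a0 //.
- by move=> j; rewrite /vjoin le_max lexx.
Qed.

Lemma step1 f pi (S : {set 'I_n}) k a x : monotone_submodular f -> nonneg_vec x ->
  nonneg_vec a -> (forall j, j \notin S -> a j = 0) ->
  f (vjoin a (restr (run pi x k :|: S) x)) <=
  f (vjoin a (restr S x)) +
  \sum_(i in ~: S) \sum_(j < k) (Ev pi i j x)%:R * hh f i a (x i).
Proof.
move=> hf x0 a0 aS.
have [f0 mono sub] := hf.
elim: k => [|k IH].
  rewrite /= finset.set0U big1 ?addr0 // => i _; by rewrite big_ord0.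
under eq_bigr do rewrite big_ord_recr /=.
rewrite big_split /= addrA.
apply: le_trans (lerD IH (lexx _)).
set U := run pi x k; set p := pi U (restr U x).
have sum0 : 0 <= \sum_(i in ~: S) (Ev pi i k x)%:R * hh f i a (x i).
  by apply: sumr_ge0 => i _; apply: mulr_ge0 => //; exact: hh_ge0.
rewrite -/U -/p.
have [pUS|pUS] := boolP (p \in U :|: S).
  have e : [set p] :|: (U :|: S) = U :|: S by apply/finset.setUidPr; rewrite finset.sub1set.
  rewrite -finset.setUA e.
  by rewrite -[X in X <= _]addr0 lerD.
have pU : p \notin U by move: pUS; rewrite finset.in_setU negb_or => /andP[].
have pS : p \notin S by move: pUS; rewrite finset.in_setU negb_or => /andP[].
have Evp : Ev pi p k x by rewrite /Ev -/U pU /= -/p eqxx.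
have -> : \sum_(i in ~: S) (Ev pi i k x)%:R * hh f i a (x i) =
  hh f p a (x p) + \sum_(i in ~: S | i != p) (Ev pi i k x)%:R * hh f i a (x i).
  by rewrite (bigD1 p) ?inE //= Evp mul1r.
have rest0 : 0 <= \sum_(i in ~: S | i != p) (Ev pi i k x)%:R * hh f i a (x i).
  by apply: sumr_ge0 => i _; apply: mulr_ge0 => //; exact: hh_ge0.
suff : f (vjoin a (restr (p |: U :|: S) x)) <=
       f (vjoin a (restr (U :|: S) x)) + hh f p a (x p).
  move=> h; apply: le_trans h _; rewrite lerD2l.
  by rewrite -[X in X <= _]addr0 lerD.
set B := vjoin a (restr (U :|: S) x).
set Y := vjoin a (unitv p (x p)).
have apz : a p = 0 by exact: aS.
have B0 : nonneg_vec B.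
  by move=> j; rewrite /B /vjoin le_max a0.
have Y0 : nonneg_vec Y.
  by move=> j; rewrite /Y /vjoin le_max a0.
have hJ : vjoin B Y = vjoin a (restr (p |: U :|: S) x).
  apply: funext => c; rewrite /B /Y /vjoin /restr /unitv.
  have [->|cp] := eqVneq c p.
    rewrite (negbTE pUS) apz !inE eqxx /=.
    rewrite (max_l (lexx 0)) (max_r (x0 p)) (max_r (x0 p)).
    by [].
  have e : (c \in p |: U :|: S) = (c \in U :|: S) by rewrite !inE (negbTE cp).
  rewrite e (max_l (a0 c)) max_l // le_max lexx //.
have hM : vmeet B Y = a.
  apply: funext => c; rewrite /B /Y /vmeet /vjoin /restr /unitv.
  have [->|cp] := eqVneq c p.
    rewrite (negbTE pUS) apz (max_l (lexx 0)) (max_r (x0 p)).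
    by rewrite min_l.
  rewrite (max_l (a0 c)) min_r // le_max lexx //.
have := sub B Y B0 Y0; rewrite hJ hM /hh -/Y.
move=> h; by rewrite addrA lerBrDr.
Qed.

Lemma sum_Ev pi i k x :
  \sum_(j < k) (Ev pi i j x)%:R = (i \in run pi x k)%:R :> R.
Proof.
elim: k => [|k IH]; first by rewrite big_ord0 /= inE.
rewrite big_ord_recr /= IH /Ev.
set U := run pi x k; set p := pi U (restr U x).
rewrite finset.in_setU1.
have [iU|iU] := boolP (i \in U); first by rewrite orbT /= addr0.
rewrite orbF /= add0r; by rewrite eq_sym.
Qed.

Lemma run_agree pi i x x' : (forall j, j != i -> x j = x' j) ->
  forall m, i \notin run pi x m -> run pi x' m = run pi x m.
Proof.
move=> hx; elim => [//|m IH] /=.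
set U := run pi x m; set p := pi U (restr U x).
rewrite finset.in_setU1 negb_or => /andP[ip iU].
rewrite IH //.
have -> : restr U x' = restr U x.
  apply: funext => j; rewrite /restr; case: ifP => // jU.
  by rewrite hx // ; apply/eqP => ji; move: iU; rewrite -ji jU.
by [].
Qed.

Lemma Ev_agree pi i m x x' : (forall j, j != i -> x j = x' j) ->
  Ev pi i m x = Ev pi i m x'.
Proof.
move=> hx.
have hx' : forall j, j != i -> x' j = x j by move=> j /hx ->.
rewrite /Ev.
have [iU|iU] := boolP (i \in run pi x m).
  have [iU'|iU'] := boolP (i \in run pi x' m) => //.
  by move: iU; rewrite (@run_agree pi i x' x hx' m iU') (negbTE iU').
rewrite (@run_agree pi i x x' hx m iU) (negbTE iU) /=.
have -> : restr (run pi x m) x' = restr (run pi x m) x.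
  apply: funext => j; rewrite /restr; case: ifP => // jU.
  by rewrite hx // ; apply/eqP => ji; move: iU; rewrite -ji jU.
by [].
Qed.
End Pointwise.



Section RunMeas.
Context {R : realType} {n : nat} (pi : @policy R n) (hpi : policy_measurable pi).
Context d' (T' : measurableType d') (Z : 'I_n -> T' -> R)
  (mZ : forall j, measurable_fun setT (Z j)).

Lemma mboolR (b : T' -> bool) : measurable_fun setT b ->
  measurable_fun setT (fun t => (b t)%:R : R).
Proof.
move=> mb.
rewrite (_ : (fun t => _) = fun t => if b t then 1 else 0).
  by apply: measurable_fun_ifT => //.
by apply: funext => t; case: (b t).
Qed.

Lemma mexists (I : finType) (b : I -> T' -> bool) :
  (forall i, measurable_fun setT (b i)) ->
  measurable_fun setT (fun t => [exists i, b i t]).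
Proof.
move=> mb; apply: (measurable_fun_bool true).
rewrite (_ : _ `&` _ = \bigcup_(i in setT) (setT `&` b i @^-1` [set true])).
  apply: fin_bigcup_measurable => // i _; exact: mb.
apply/seteqP; split => t /=.
- by move=> [_ /existsP[i hi]]; exists i => //.
- by move=> [i _ [_ hi]]; split => //; apply/existsP; exists i.
Qed.

Lemma mrestr (U : {set 'I_n}) j :
  measurable_fun setT (fun t => restr U (fun j => Z j t) j).
Proof. by rewrite /restr; case: (j \in U) => //; exact: mZ. Qed.

Lemma mpi U p : measurable_fun setT (fun t => pi U (restr U (fun j => Z j t)) == p).
Proof.
have h := hpi U p d' T' (fun j t => restr U (fun j => Z j t) j) (mrestr U).
apply: (measurable_fun_bool true).
rewrite (_ : _ `&` _ = setT `&` (fun t => (pi U (fun i => restr U (fun j => Z j t) i) == p)%:R : R) @^-1` [set 1]).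
  by apply: h => //.
apply/seteqP; split => t /= [_ ht]; split => //.
- by rewrite ht.
- by move: ht; case: (_ == p) => //= /esym/eqP; rewrite oner_eq0.
Qed.

Lemma mrun m U : measurable_fun setT (fun t => run pi (fun j => Z j t) m == U).
Proof.
elim: m U => [|m IH] U.
  by apply: (measurable_cst (finset.set0 == U)).

rewrite (_ : (fun t => _) = fun t => [exists V, (run pi (fun j => Z j t) m == V) &&
    [exists p, (pi V (restr V (fun j => Z j t)) == p) && (p |: V == U)]]).
  apply: mexists => V; apply: measurable_and => //.
  apply: mexists => p; apply: measurable_and; first exact: mpi.
  exact: measurable_cst.
apply: funext => t /=.
apply/eqP/existsP.
- move=> <-; set V := run pi (fun j => Z j t) m; exists V; rewrite eqxx /=.
  by apply/existsP; exists (pi V (restr V (fun j => Z j t))); rewrite !eqxx.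
- by move=> [V /andP[/eqP -> /existsP[p /andP[/eqP -> /eqP]]]].
Qed.

Lemma mmem m j : measurable_fun setT (fun t => j \in run pi (fun j => Z j t) m).
Proof.
rewrite (_ : (fun t => _) = fun t => [exists V, (run pi (fun j => Z j t) m == V) && (j \in V)]).
  by apply: mexists => V; apply: measurable_and => //; exact: mrun.
apply: funext => t; apply/idP/existsP.
- by move=> h; exists (run pi (fun j => Z j t) m); rewrite eqxx h.
- by move=> [V /andP[/eqP -> ]].
Qed.

Lemma mEv i m : measurable_fun setT (fun t => Ev pi i m (fun j => Z j t)).
Proof.
rewrite (_ : (fun t => _) = fun t => [exists V, (run pi (fun j => Z j t) m == V) &&
   ((i \notin V) && (pi V (restr V (fun j => Z j t)) == i))]).
  apply: mexists => V; apply: measurable_and; first exact: mrun.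
  by apply: measurable_and => //; exact: mpi.
apply: funext => t; rewrite /Ev; apply/idP/existsP.
- by move=> h; exists (run pi (fun j => Z j t) m); rewrite eqxx h.
- by move=> [V /andP[/eqP -> ]].
Qed.
End RunMeas.



Section Main.
Context (R : realType) (d : measure_display) (T : measurableType d)
    (P : probability T R) (n : nat)
    (th thh : 'I_n -> T -> R).
Hypothesis mth : forall i, measurable_fun setT (th i).
Hypothesis mthh : forall i, measurable_fun setT (thh i).
Let X := (fun s : 'I_n + 'I_n => match s with inl i => th i | inr i => thh i end).
Hypothesis hind : mutually_independent P X.
Hypothesis hlaw : forall i, same_law P (thh i) (th i).

Lemma mX s : measurable_fun setT (X s).
Proof. by case: s. Qed.

Lemma Pfin (A : set T) : measurable A -> (fine (P A))%:E = P A.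
Proof.
move=> mA; rewrite fineK // ge0_fin_numE //.
exact: le_lt_trans (probability_le1 P mA) (ltry 1).
Qed.

Lemma mrect (J : pred 'I_n) (C : 'I_n -> set R) : (forall j, measurable (C j)) ->
  measurable [set t | forall j, J j -> C j (th j t)].
Proof.
move=> mC.
rewrite (_ : [set t | _] = \bigcap_(j in setT) (setT `&` (th j @^-1` (if J j then C j else setT)))).
  apply: fin_bigcap_measurable => // j _; apply: mth => //.
  by case: (J j).
apply/seteqP; split => t /=.
- by move=> h j _; split => //; case: ifP => // /h.
- by move=> h j Jj; have [_] := h j I; rewrite /preimage /= Jj.
Qed.

Lemma indep_th (J : pred 'I_n) (C : 'I_n -> set R) : (forall j, measurable (C j)) ->
  P [set t | forall j, J j -> C j (th j t)] =
  (\prod_(j | J j) fine (P (th j @^-1` C j)))%:E.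
Proof.
move=> mC.
pose B := fun s : 'I_n + 'I_n => match s with
  inl j => if J j then C j else setT | inr _ => setT end.
have mB : forall s, measurable (B s) by case=> [j|j] //=; case: (J j).
have := hind B mB.
rewrite (_ : [set t | forall i, B i (X i t)] = [set t | forall j, J j -> C j (th j t)]).
  move=> ->; congr (_%:E).
  rewrite big_sumType /=.
  rewrite [X in _ * X]big1 ?mulr1; last first.
    by move=> j _; rewrite preimage_setT probability_setT.
  rewrite [RHS]big_mkcond /=; apply: eq_bigr => j _.
  by case: (J j) => //; rewrite preimage_setT probability_setT.
apply/seteqP; split => t /=.
- by move=> h j Jj; have := h (inl j); rewrite /= Jj.
- by move=> h [j|j] //=; case: ifP => // /h.
Qed.

Definition PP : probability (T * T)%type R := (P \x P)%E.

Definition Y3 (i0 : 'I_n) : 'I_n + 'I_n -> (T * T) * T -> R :=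
  fun s w => match s with
  | inl j => th j w.1.1
  | inr j => if j == i0 then th i0 w.1.2 else th j w.2 end.

Lemma mY3 i0 s : measurable_fun setT (Y3 i0 s).
Proof.
rewrite /Y3; case: s => [j|j] /=.
  apply: measurableT_comp => //; exact: (measurableT_comp measurable_fst measurable_fst).
case: (j == i0).
  apply: measurableT_comp => //; exact: (measurableT_comp measurable_snd measurable_fst).
by apply: measurableT_comp => //; exact: measurable_snd.
Qed.

Lemma prod3 (A1 A2 A3 : set T) : measurable A1 -> measurable A2 -> measurable A3 ->
  (PP \x P)%E ((A1 `*` A2) `*` A3) = (P A1 * P A2 * P A3)%E.
Proof.
move=> m1 m2 m3.
rewrite product_measure1E //; last exact: measurableX.
congr (_ * _)%E; exact: product_measure1E.
Qed.

Lemma rect_eq i0 (B : 'I_n + 'I_n -> set R) : (forall s, measurable (B s)) ->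
  P [set t | forall s, B s (X s t)] =
  (PP \x P)%E [set w | forall s, B s (Y3 i0 s w)].
Proof.
move=> mB.
pose C1 := fun j => B (inl j). pose C2 := fun j => B (inr j).
have mC1 : forall j, measurable (C1 j) by move=> j; exact: mB.
have mC2 : forall j, measurable (C2 j) by move=> j; exact: mB.
rewrite (_ : [set w | forall s, B s (Y3 i0 s w)] =
  ([set t | forall j, predT j -> C1 j (th j t)] `*`
   [set t | forall j, pred1 i0 j -> C2 j (th j t)]) `*`
   [set t | forall j, predC1 i0 j -> C2 j (th j t)]); last first.
  apply/seteqP; split => [[[t1 t2] t3]|[[t1 t2] t3]] /=.
  - move=> h; split; first split.
    + by move=> j _; exact: (h (inl j)).
    + by move=> j /eqP ->; have := h (inr i0); rewrite /= eqxx.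
    + by move=> j ji; have := h (inr j); rewrite /= (negbTE ji).
  - move=> [[h1 h2] h3] [j|j] /=; first exact: h1.
    by case: eqP => [->|/eqP ji]; [exact: h2|exact: h3].
have r1 := mrect predT C1 mC1; have r2 := mrect (pred1 i0) C2 mC2.
have r3 := mrect (predC1 i0) C2 mC2.
rewrite prod3 //.
rewrite (indep_th predT C1 mC1) (indep_th (pred1 i0) C2 mC2).
rewrite (indep_th (predC1 i0) C2 mC2) -!EFinM.
rewrite (hind B mB); congr (_%:E).
rewrite big_sumType /= big_pred1_eq -mulrA; congr (_ * _).
rewrite (bigD1 i0) //=; congr (_ * _).
  by rewrite /C2 hlaw.
by apply: eq_bigr => j _; rewrite /C2 hlaw.
Qed.

Variables (f : ('I_n -> R) -> R) (pi : @policy R n) (S : {set 'I_n}).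
Hypothesis hf : monotone_submodular f.
Hypothesis hfm : vec_measurable f.
Hypothesis hpi : policy_measurable pi.
Hypothesis th0 : forall i t, 0 <= th i t.
Hypothesis thh0 : forall i t, 0 <= thh i t.

Lemma mhh d' (T' : measurableType d') (A : 'I_n -> T' -> R) (r : T' -> R) i :
  (forall l, measurable_fun setT (A l)) -> measurable_fun setT r ->
  measurable_fun setT (fun t => hh f i (fun l => A l t) (r t)).
Proof.
move=> mA mr; rewrite /hh.
apply: measurable_funB; last exact: (hfm d' T' A mA).
apply: (hfm d' T' (fun l t => vjoin (fun l => A l t) (unitv i (r t)) l)) => l.
rewrite /vjoin; apply: measurable_maxr => //.
by rewrite /unitv; case: (l == i).
Qed.

Lemma Pind (b : T -> bool) : measurable_fun setT b ->
  (\int[P]_t ((b t)%:R)%:E)%E = P [set t | b t].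
Proof.
move=> mb.
have mA : measurable [set t | b t].
  rewrite (_ : [set t | b t] = setT `&` b @^-1` [set true]); first exact: mb.
  by apply/seteqP; split => t //= [].
rewrite -[in RHS](setIT [set t | b t]) -integral_indic //.
apply: eq_integral => t _; rewrite indicE.
have -> : (t \in [set t | b t]) = b t by apply/idP/idP => [/set_mem|/mem_set].
by [].
Qed.

Lemma restr_ge0 (U : {set 'I_n}) (x : 'I_n -> R) : nonneg_vec x -> nonneg_vec (restr U x).
Proof. by move=> x0 l; rewrite /restr; case: ifP. Qed.

Lemma key i j :
  (\int[P]_t ((Ev pi i j (vec_of thh t))%:R * hh f i (restr S (vec_of th t)) (thh i t))%:E)%E
  = ((\int[P]_t Delta P th f i (restr S (vec_of th t))) *
     P [set t | Ev pi i j (vec_of th t)])%E.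
Proof.
pose K : finType := ('I_n + 'I_n)%type.
pose phi : MV K -> R := fun v => Num.max 0
  ((Ev pi i j (fun l => v (inr l)))%:R * hh f i (restr S (fun l => v (inl l))) (v (inr i))).
have mphi : measurable_fun setT phi.
  apply: measurable_maxr => //.
  apply: measurable_funM.
    apply: mboolR.
    exact: (@mEv R n pi hpi _ _ _ (fun l => mcoord K (inr l)) i j).
  apply: (mhh _ (MV K) (fun l (v : MV K) => restr S (fun l => v (inl l)) l) (fun v => v (inr i)) i).
    by move=> l; exact: (mrestr _ _ _ (fun l => mcoord K (inl l)) S l).
  exact: mcoord.
have phi0 : forall v, 0 <= phi v by move=> v; rewrite le_max lexx.
have hL := @law R K _ _ _ _ P (PP \x P)%E X (Y3 i) mX (mY3 i) (rect_eq i) phi mphi phi0.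
transitivity (\int[P]_t (phi (fun k => X k t))%:E)%E.
  apply: eq_integral => t _; congr (_%:E); rewrite /phi max_r //.
  apply: mulr_ge0 => //; apply: hh_ge0 => //; try exact: thh0.
  by apply: restr_ge0 => l; exact: th0.
rewrite hL.
pose F := fun x : T * T => hh f i (restr S (vec_of th x.1)) (th i x.2).
pose G := fun y : T => (Ev pi i j (vec_of th y))%:R : R.
have F0 : forall x, 0 <= F x.
  move=> x; apply: hh_ge0 => //; by apply: restr_ge0 => l; exact: th0.
have G0 : forall y, 0 <= G y by move=> y; rewrite /G.
have mF : measurable_fun setT F.
  apply: (mhh _ (T * T)%type (fun l (x : T * T) => restr S (vec_of th x.1) l) (fun x => th i x.2) i).
    move=> l; apply: (mrestr _ _ (fun l x => th l x.1)) => l'.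
    exact: (measurableT_comp (mth l') measurable_fst).
  exact: (measurableT_comp (mth i) measurable_snd).
have mG : measurable_fun setT G by apply: mboolR; exact: (@mEv R n pi hpi _ _ _ mth i j).
transitivity (\int[(PP \x P)%E]_w ((F w.1 * G w.2)%:E))%E.
  apply: eq_integral => w _; congr (_%:E); rewrite /phi max_r; last first.
    by apply: mulr_ge0 => //; apply: hh_ge0 => //; [apply: restr_ge0 => l; exact: th0|rewrite /Y3 eqxx].
  rewrite mulrC /F /G /=; congr (_ * _).
    by rewrite /Y3 eqxx.
  rewrite (@Ev_agree R n pi i j _ (vec_of th w.2)) // => l li.
  by rewrite (negbTE li).
have mGb : measurable_fun setT (fun t => Ev pi i j (vec_of th t)).
  exact: (@mEv R n pi hpi _ _ _ mth i j).
have mFG : measurable_fun setT (fun w : (T * T) * T => (F w.1 * G w.2)%:E).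
  apply/measurable_EFinP; apply: measurable_funM.
    exact: (measurableT_comp mF measurable_fst).
  exact: (measurableT_comp mG measurable_snd).
have FG0 : forall w : (T * T) * T, (0 <= (F w.1 * G w.2)%:E)%E.
  by move=> w; rewrite lee_fin mulr_ge0.
have fub := @fubini_tonelli1 _ _ _ _ R PP P _ mFG FG0.
rewrite fub.
have mGE : measurable_fun setT (fun y => (G y)%:E) by apply/measurable_EFinP.
have mFE : measurable_fun setT (fun x => (F x)%:E) by apply/measurable_EFinP.
transitivity (\int[PP]_x ((F x)%:E * \int[P]_y (G y)%:E))%E.
  apply: eq_integral => x _; rewrite /fubini_F -ge0_integralZl_EFin //.
  by move=> y _; rewrite lee_fin.
rewrite ge0_integralZr //; last 2 first.
  - by move=> x _; rewrite lee_fin.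
  - by apply: integral_ge0 => y _; rewrite lee_fin.
congr (_ * _)%E.
  have FE0 : forall x, (0 <= (F x)%:E)%E by move=> x; rewrite lee_fin.
  etransitivity; first exact: (@fubini_tonelli1 _ _ _ _ R P P _ mFE FE0).
  apply: eq_integral => t _.
  by rewrite /fubini_F /Delta /F /hh.
by rewrite -(Pind _ mGb).
Qed.

Lemma int_sum (I : finType) (J : pred I) (g : I -> T -> R) :
  (forall i, measurable_fun setT (g i)) -> (forall i t, 0 <= g i t) ->
  (\int[P]_t ((\sum_(i | J i) g i t)%:E) = \sum_(i | J i) \int[P]_t (g i t)%:E)%E.
Proof.
move=> mg g0.
transitivity (\int[P]_t (\sum_(i <- index_enum I) (if J i then (g i t)%:E else 0%E)))%E.
  apply: eq_integral => t _; rewrite -sumEFin big_mkcond /=.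
  by apply: eq_bigr => i _; case: (J i).
rewrite ge0_integral_sum //.
- rewrite [RHS]big_mkcond /=; apply: eq_bigr => i _.
  by case: (J i) => //; rewrite integral0.
- by move=> i; case: (J i) => //; apply/measurable_EFinP.
- by move=> i t _; case: (J i) => //; rewrite lee_fin.
Qed.

Lemma int_sumT (I : finType) (g : I -> T -> R) :
  (forall i, measurable_fun setT (g i)) -> (forall i t, 0 <= g i t) ->
  (\int[P]_t ((\sum_i g i t)%:E) = \sum_i \int[P]_t (g i t)%:E)%E.
Proof. by move=> mg g0; exact: (int_sum _ xpredT g mg g0). Qed.

Lemma final k :
 (\int[P]_t (f (vjoin (restr S (vec_of th t))
                 (restr (run pi (vec_of thh t) k :|: S) (vec_of thh t))))%:E
   <= \int[P]_t (f (vjoin (restr S (vec_of th t)) (restr S (vec_of thh t))))%:E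
      + \sum_(i in ~: S) (P [set t | i \in run pi (vec_of th t) k] *
           \int[P]_t Delta P th f i (restr S (vec_of th t))))%E.
Proof.
pose Fij := fun i (j : 'I_k) t =>
  (Ev pi i j (vec_of thh t))%:R * hh f i (restr S (vec_of th t)) (thh i t).
have a0 : forall t, nonneg_vec (restr S (vec_of th t)).
  by move=> t; apply: restr_ge0 => l; exact: th0.
have F0 : forall i j t, 0 <= Fij i j t.
  by move=> i j t; apply: mulr_ge0 => //; apply: hh_ge0.
have mFij : forall i j, measurable_fun setT (Fij i j).
  move=> i j; apply: measurable_funM.
    by apply: mboolR; exact: (@mEv R n pi hpi _ _ _ mthh i j).
  apply: (mhh _ T (fun l t => restr S (vec_of th t) l) (fun t => thh i t) i) => //.
  by move=> l; exact: (mrestr _ _ _ mth S l).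
have mg0 : measurable_fun setT
    (fun t => f (vjoin (restr S (vec_of th t)) (restr S (vec_of thh t)))).
  apply: (hfm _ T (fun l t => vjoin (restr S (vec_of th t)) (restr S (vec_of thh t)) l)) => l.
  rewrite /vjoin; apply: measurable_maxr.
    exact: (mrestr _ _ _ mth S l).
  exact: (mrestr _ _ _ mthh S l).
have g00 : forall t, 0 <= f (vjoin (restr S (vec_of th t)) (restr S (vec_of thh t))).
  move=> t; have [f0 _ _] := hf; apply: f0 => l.
  by rewrite /vjoin le_max a0.
have mS : forall i, measurable_fun setT (fun t => \sum_(j < k) Fij i j t).
  by move=> i; apply: measurable_sum => j; exact: mFij.
have S0 : forall i t, 0 <= \sum_(j < k) Fij i j t.
  by move=> i t; apply: sumr_ge0 => j _.
apply: le_trans (_ : (\int[P]_t ((f (vjoin (restr S (vec_of th t)) (restr S (vec_of thh t))) +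
     \sum_(i in ~: S) \sum_(j < k) Fij i j t)%:E) <= _)%E).
  apply: ge0_le_integral => //.
  - move=> t _; rewrite lee_fin; have [f0 _ _] := hf; apply: f0 => l.
    by rewrite /vjoin le_max a0.
  - apply/measurable_EFinP.
    have mmS : forall l, measurable_fun setT
        (fun t => (l \in run pi (vec_of thh t) k :|: S)).
      move=> l.
      rewrite (_ : (fun t => _) = (fun t => (l \in run pi (vec_of thh t) k) || (l \in S))).
        apply: measurable_or => //; exact: (@mmem R n pi hpi _ _ _ mthh k l).
      by apply: funext => t; rewrite finset.in_setU.
    have mco : forall l, measurable_fun setT (fun t => vjoin (restr S (vec_of th t))
        (restr (run pi (vec_of thh t) k :|: S) (vec_of thh t)) l).
      move=> l; rewrite /vjoin; apply: measurable_maxr.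
        exact: (mrestr _ _ _ mth S l).
      rewrite /restr; apply: measurable_fun_ifT; first exact: mmS.
        exact: mthh.
      exact: measurable_cst.
    exact: (hfm _ T _ mco).
  - apply/measurable_EFinP.
    have mrest : measurable_fun setT (fun t => \sum_(i in ~: S) \sum_(j < k) Fij i j t).
      rewrite (_ : (fun t => _) = (fun t => \sum_(i <- index_enum 'I_n)
          (if i \in ~: S then \sum_(j < k) Fij i j t else 0))).
        by apply: measurable_sum => i; case: (i \in ~: S).
      by apply: funext => t; rewrite big_mkcond.
    exact: (measurable_funD mg0 mrest).
  - move=> t _; rewrite lee_fin.
    apply: (step1 f pi S k (restr S (vec_of th t)) (vec_of thh t) hf) => //.
      by move=> l; exact: thh0.
    by move=> l hl; rewrite /restr (negbTE hl).
under eq_integral do rewrite EFinD.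
have mrest : measurable_fun setT (fun t => \sum_(i in ~: S) \sum_(j < k) Fij i j t).
  rewrite (_ : (fun t => _) = (fun t => \sum_(i <- index_enum 'I_n)
      (if i \in ~: S then \sum_(j < k) Fij i j t else 0))).
    by apply: measurable_sum => i; case: (i \in ~: S).
  by apply: funext => t; rewrite big_mkcond.
rewrite ge0_integralD //; try by [move=> t _; rewrite lee_fin; apply: sumr_ge0 => i _ | apply/measurable_EFinP].
apply: leeD2l.
rewrite (int_sum _ (fun i => i \in ~: S) (fun i t => \sum_(j < k) Fij i j t)) //.
apply: lee_sum => i iS.
rewrite (int_sumT _ (fun j t => Fij i j t)) //.
under eq_bigr do rewrite key.
rewrite -ge0_sume_distrr; last by move=> j _; exact: measure_ge0.
rewrite muleC le_eqVlt; apply/orP; left; apply/eqP.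
congr (_ * _)%E.
transitivity (\sum_(j < k) \int[P]_t ((Ev pi i j (vec_of th t))%:R%:E))%E.
  apply: eq_bigr => j _; rewrite Pind //.
  exact: (@mEv R n pi hpi _ _ _ mth i j).
rewrite -(int_sumT 'I_k (fun (j : 'I_k) t => (Ev pi i j (vec_of th t))%:R)); last 2 first.
- by move=> j; apply: mboolR; exact: (@mEv R n pi hpi _ _ _ mth i j).
- by move=> j t.
under eq_integral do rewrite sum_Ev.
rewrite Pind //.
exact: (@mmem R n pi hpi _ _ _ mth k i).
by move=> t _; rewrite lee_fin.
Qed.

End Main.

Theorem lemma3 (R : realType) (d : measure_display) (T : measurableType d)
    (P : probability T R) (n : nat)
    (th thh : 'I_n -> T -> R) (f : ('I_n -> R) -> R) (k : nat) (pi : policy)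
    (S : {set 'I_n}) :
  (forall i, measurable_fun setT (th i)) ->
  (forall i, measurable_fun setT (thh i)) ->
  (forall i t, 0 <= th i t) -> (forall i t, 0 <= thh i t) ->
  mutually_independent P
    (fun s : 'I_n + 'I_n => match s with inl i => th i | inr i => thh i end) ->
  (forall i, same_law P (thh i) (th i)) ->
  monotone_submodular f -> vec_measurable f ->
  (1 <= k <= n)%N ->
  valid_policy k pi -> policy_measurable pi ->
  (forall pi' : policy, valid_policy k pi' -> policy_measurable pi' ->
     (\int[P]_t (f (restr (run pi' (vec_of th t) k) (vec_of th t)))%:E <=
      \int[P]_t (f (restr (run pi (vec_of th t) k) (vec_of th t)))%:E)%E) ->
  (\int[P]_t (f (vjoin (restr S (vec_of th t))
                       (restr (run pi (vec_of thh t) k :|: S) (vec_of thh t))))%:E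
   <= \int[P]_t (f (vjoin (restr S (vec_of th t)) (restr S (vec_of thh t))))%:E
      + \sum_(i in ~: S)
          (P [set t | i \in run pi (vec_of th t) k]
           * \int[P]_t Delta P th f i (restr S (vec_of th t))))%E.
Proof.
move=> mth mthh th0 thh0 hind hlaw hf hfm _ _ hpi _.

exact: (@final R d T P n th thh mth mthh hind hlaw f pi S hf hfm hpi th0 thh0 k).
Qed.
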